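(* Let $\mathcal{A}=\{A_i\}_{i=0}^p$ be a set of $n\times n$ matrices, and let $\mathcal{B}=\{B_i\}_{i=0}^q$ be a set of $n\times n$ matrices with $\operatorname{span}\{B_0,\dots,B_q\}=\operatorname{span}\{A_0,\dots,A_p\}$. Let $P_{\mathcal{B}}(\lambda)=\sum_{i=0}^q\lambda^iB_i$. If $P_{\mathcal{B}}(\lambda)$ has $n$ eigenpairs $(\lambda_j,x_j)$, $j=1,\dots,n$, such that $X=[x_1,\dots,x_n]$ is nonsingular and the geometric multiplicities of $\lambda_1,\dots,\lambda_n$ all equal one, then all solutions to the GJBD problem of $\mathcal{A}$ are equivalent.
   Context: $\operatorname{span}\{A_0,\dots,A_p\}=\{\sum_i\alpha_iA_i:\alpha_i\in\mathbb{C}\}$. A partition of $n$ is a tuple $\tau_n=(n_1,\dots,n_t)$ of positive integers with sum $n$; $\operatorname{card}(\tau_n)=t$. For an $n\times n$ matrix $A$ partitioned into blocks $A_{jk}$ of size $n_j\times n_k$, $A$ is $\tau_n$-block diagonal if $A_{jk}=0$ for $j\ne k$; $\mathbb{D}_{\tau_n}$ is the set of such matrices. The matrices lie in one of $\{$real symmetric, complex Hermitian, $\mathbb{R}^{n\times n}$, $\mathbb{C}^{n\times n}\}$ and diagonalizers are sought in a class $\mathbb{W}_n\in\{$real orthogonal, unitary, real nonsingular, complex nonsingular$\}$; $(\cdot)^\star$ is transpose (real) or conjugate transpose (complex). The JBD problem of a matrix set for a partition $\tau_n$: find $W\in\mathbb{W}_n$ with $W^\star A_iW\in\mathbb{D}_{\tau_n}$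 for all $i$. A solution of the GJBD problem is a pair $(\tau_n,W)$ with $W$ solving the JBD problem for $\tau_n$ and $\operatorname{card}(\tau_n)$ maximal among partitions for which the JBD problem is solvable. For a $t\times t$ permutation matrix $\Pi_t$, $\tau_n\Pi_t$ denotes the correspondingly permuted partition (viewing $\tau_n$ as a row vector), and the block permutation matrix corresponding with $\Pi_t$ is the $n\times n$ matrix obtained by replacing, in the $i$th row of $\Pi_t$, the entry $1$ by a permutation matrix of order $n_i$ and the entries $0$ by zero matrices of appropriate sizes. Two solutions $(\tau_n,W)$, $(\hat\tau_n,\widehat W)$ are equivalent if there exist a $t\times t$ permutation matrix $\Pi_t$ and a nonsingular $D\in\mathbb{D}_{\tau_n}$ such that $(\hat\tau_n,\widehat W)=(\tau_n\Pi_t,WD\Pi)$, where $\Pi$ is the block permutation matrix corresponding with $\Pi_t$. Eigenpairs $(\lambda,x)$ of $P(\lambda)$: $\det P(\lambda)=0$, $x\ne0$, $P(\lambda)x=0$; geometric multiplicity of $\lambda$ is $\dim\ker P(\lambda)$. *)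

(* Defs.v *)
(* Scalars: an arbitrary numClosedFieldType C (e.g. the
   complex numbers); "real" means [\is Num.real]. *)
From HB Require Import structures.
From mathcomp Require Import all_boot all_order all_fingroup all_algebra.
Set Implicit Arguments. Unset Strict Implicit. Unset Printing Implicit Defensive.
Import Order.TTheory GRing.Theory Num.Theory.
Local Open Scope ring_scope.

(* The four settings: (matrix class, diagonalizer class) pairs. *)
Inductive setting :=
  | RealSymOrth
  | HermUnitary
  | RealNonsing
  | CplxNonsing.

Section Defs.
Variable C : numClosedFieldType.

Definition real_mx n m (A : 'M[C]_(n, m)) : Prop :=
  forall i j, A i j \is Num.real.

Definition ctrmx n m (A : 'M[C]_(n, m)) : 'M[C]_(m, n) := (map_mx Num.conj A)^T.

Definition mxstar (st : setting) n (A : 'M[C]_n) : 'M[C]_n :=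
  match st with
  | RealSymOrth | RealNonsing => A^T
  | HermUnitary | CplxNonsing => ctrmx A
  end.

Definition mat_class (st : setting) n (A : 'M[C]_n) : Prop :=
  match st with
  | RealSymOrth => real_mx A /\ A^T = A
  | HermUnitary => ctrmx A = A
  | RealNonsing => real_mx A
  | CplxNonsing => True
  end.

Definition W_class (st : setting) n (W : 'M[C]_n) : Prop :=
  match st with
  | RealSymOrth => real_mx W /\ W^T *m W = 1%:M
  | HermUnitary => ctrmx W *m W = 1%:M
  | RealNonsing => real_mx W /\ W \in unitmx
  | CplxNonsing => W \in unitmx
  end.

Definition in_span n p (A : 'I_p -> 'M[C]_n) (M : 'M[C]_n) : Prop :=
  exists a : 'I_p -> C, M = \sum_(i < p) a i *: A i.

Definition mxpoly_eval n q (B : 'I_q -> 'M[C]_n) (l : C) : 'M[C]_n :=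
  \sum_(i < q) (l ^+ i) *: B i.

Definition eigenpair n q (B : 'I_q -> 'M[C]_n) (l : C) (x : 'cV[C]_n) : Prop :=
  \det (mxpoly_eval B l) = 0 /\ x != 0 /\ mxpoly_eval B l *m x = 0.

(* geometric multiplicity: dim ker P(l); the column space of cokermx M is
   exactly {x | M x = 0}. *)
Definition geom_mult n q (B : 'I_q -> 'M[C]_n) (l : C) : nat :=
  \rank (cokermx (mxpoly_eval B l)).

End Defs.

Definition is_partition (n : nat) (s : seq nat) : bool :=
  all (fun k => 0 < k)%N s && (sumn s == n).

(* index (0-based) of the block containing row/column i (0-based):
   the number of partial sums n_1+..+n_k (k >= 1) that are <= i. *)
Definition blk (s : seq nat) (i : nat) : nat :=
  count (fun ps => ps <= i)%N (scanl addn 0%N s).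

Definition block_diag (C : numClosedFieldType) n (s : seq nat) (A : 'M[C]_n) : Prop :=
  forall i j : 'I_n, blk s i != blk s j -> A i j = 0.

Definition jbd_sol (C : numClosedFieldType) (st : setting) n p
  (A : 'I_p -> 'M[C]_n) (s : seq nat) (W : 'M[C]_n) : Prop :=
  W_class st W /\ forall i, block_diag s (mxstar st W *m A i *m W).

Definition gjbd_sol (C : numClosedFieldType) (st : setting) n p
  (A : 'I_p -> 'M[C]_n) (s : seq nat) (W : 'M[C]_n) : Prop :=
  is_partition n s /\ jbd_sol st A s W /\
  forall s', is_partition n s' -> (exists W', jbd_sol st A s' W') ->
    (size s' <= size s)%N.

(* tau Pi_t, where Pi_t is the permutation matrix whose i-th row has its 1 in
   column sigma(i): the k-th entry is tau_{sigma^-1(k)}. *)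
Definition perm_part (s : seq nat) (sg : 'S_(size s)) : seq nat :=
  [seq nth 0%N s (val ((sg^-1)%g k)) | k <- enum 'I_(size s)].

(* Equivalence of solutions: (s2, W2) = (s Pi_t, W D Pi) where D is a
   nonsingular s-block diagonal matrix and Pi = perm_mx pi is the block
   permutation matrix corresponding with Pi_t: the rows of the i-th block
   (w.r.t. s) have their 1 in the sigma(i)-th column block (w.r.t. s Pi_t),
   so that this block is a permutation matrix of order n_i. *)
Definition equiv_sol (C : numClosedFieldType) n
  (s1 : seq nat) (W1 : 'M[C]_n) (s2 : seq nat) (W2 : 'M[C]_n) : Prop :=
  exists sg : 'S_(size s1), exists D : 'M[C]_n, exists pi : 'S_n,
    [/\ D \in unitmx, block_diag s1 D,
        (forall (r : 'I_n) (k : 'I_(size s1)),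
            blk s1 r = val k -> blk (perm_part sg) (pi r) = val (sg k)),
        s2 = perm_part sg
      & W2 = W1 *m D *m perm_mx pi].

(* Main.v *)
Require Import Defs.
From HB Require Import structures.
From mathcomp Require Import all_boot all_order all_fingroup all_algebra.
From mathcomp Require Import zify.
Set Implicit Arguments. Unset Strict Implicit. Unset Printing Implicit Defensive.
Import GRing.Theory Num.Theory.
Local Open Scope ring_scope.

Lemma scanl_addn_shift x y s :
  scanl addn (x + y)%N s = map (addn x) (scanl addn y s).
Proof.
elim: s x y => [//|a s IH] x y /=; by rewrite -addnA IH.
Qed.

Lemma blk_cons x s i :
  blk (x :: s) i = if (i < x)%N then 0%N else (blk s (i - x)).+1.
Proof.
rewrite /blk /= add0n -[x in scanl _ x]addn0 scanl_addn_shift count_map.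
case: ltnP => hi.
  rewrite add0n; transitivity (count pred0 (scanl addn 0 s)); last exact: count_pred0.
  apply: eq_count => y /=.
  apply/negbTE; rewrite -ltnNge; lia.
rewrite add1n; congr (_.+1); apply: eq_count => y /=.
apply/idP/idP; lia.
Qed.

Lemma count_blk s k :
  count (fun i => blk s i == k) (iota 0 (sumn s)) = nth 0%N s k.
Proof.
elim: s k => [|x s IH] k /=.
  by case: k.
rewrite iotaD count_cat.
have -> : iota (0 + x) (sumn s) = map (addn x) (iota 0 (sumn s)).
  by rewrite -iotaDl addn0.
rewrite count_map.
have -> : count (fun i => blk (x :: s) i == k) (iota 0 x) = ((k == 0%N) * x)%N.
  rewrite (@eq_in_count _ _ (fun _ => k == 0%N)); last first.
    by move=> i; rewrite mem_iota add0n => /andP[_ hi]; rewrite blk_cons hi eq_sym.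
  case: (k == 0%N); first by rewrite count_predT size_iota mul1n.
  by rewrite count_pred0.
rewrite (@eq_count _ _ (fun i => (blk s i).+1 == k)); last first.
  move=> i /=; rewrite blk_cons.
  have -> : (x + i < x)%N = false by lia.
  by rewrite addKn.
case: k => [|k]; first by rewrite count_pred0 mul1n addn0.
rewrite mul0n add0n /= -IH; apply: eq_count => i /=; by rewrite eqSS.
Qed.

Lemma card_ord_count n (p : pred nat) :
  #|[pred i : 'I_n | p i]| = count p (iota 0 n).
Proof.
rewrite -val_enum_ord count_map cardE /enum_mem size_filter count_filter.
by apply: eq_count => i; rewrite !inE andbT.
Qed.

Lemma card_blk n s k : sumn s = n ->
  #|[pred i : 'I_n | blk s i == k]| = nth 0%N s k.
Proof. by move=> <-; rewrite (card_ord_count _ (fun i => blk s i == k)) count_blk. Qed.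

Lemma uniq_map_inj (T U : eqType) (f : T -> U) (s : seq T) :
  uniq (map f s) -> {in s &, forall x y, f x = f y -> x = y}.
Proof.
elim: s => [//|a s IH] /= /andP[ha hu] x y.
rewrite !inE => /orP[/eqP->|hx] /orP[/eqP->|hy] //.
- by move=> e; move: ha; rewrite e map_f.
- by move=> e; move: ha; rewrite -e map_f.
- exact: IH.
Qed.

Lemma undup_map_le (T U : eqType) (f : T -> U) (s : seq T) :
  (size (undup (map f s)) <= size (undup s))%N.
Proof.
rewrite -(size_map f); apply: uniq_leq_size; first exact: undup_uniq.
move=> x; rewrite mem_undup => /mapP [y hy ->]; apply: map_f; by rewrite mem_undup.
Qed.

Lemma undup_map_eq (T U : eqType) (f : T -> U) (s : seq T) :
  size (undup (map f s)) = size (undup s) ->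
  {in s &, forall x y, f x = f y -> x = y}.
Proof.
move=> e x y hx hy; apply: (@uniq_map_inj _ _ f (undup s)); rewrite ?mem_undup //.
apply: (@leq_size_uniq _ (undup (map f s))); first exact: undup_uniq.
  move=> z; rewrite mem_undup => /mapP [w hw ->]; apply: map_f; by rewrite mem_undup.
by rewrite size_map e.
Qed.

Lemma card_count_enum n (P : pred 'I_n) : count P (enum 'I_n) = #|P|.
Proof. by rewrite cardE /enum_mem size_filter count_filter; apply: eq_count => i; rewrite !inE andbT. Qed.

Lemma count_map_enum n (T : eqType) (f : 'I_n -> T) x :
  count_mem x (map f (enum 'I_n)) = #|[pred i | f i == x]|.
Proof. by rewrite count_map card_count_enum. Qed.

Lemma perm_of_counts n (f g : 'I_n -> nat) :
  (forall k, #|[pred i | f i == k]| = #|[pred i | g i == k]|) ->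
  exists s : 'S_n, forall i, f i = g (s i).
Proof.
move=> h.
have : perm_eq (map f (enum 'I_n)) [tuple g i | i < n].
  have -> : tval [tuple g i | i < n] = map g (enum 'I_n).
    by rewrite [LHS]/= -val_ord_tuple.
  apply/allP => x _.
  rewrite inE !count_map_enum.
  by apply/eqP; have := h x.
move/tuple_permP => [s hs]; exists s => i.
have := congr1 (fun l => nth 0%N l i) hs.
rewrite (nth_map i) ?size_enum_ord // nth_ord_enum /= => ->.
by rewrite -[nth _ _ _]/(nth 0%N (mktuple _) i) nth_mktuple tnth_mktuple.
Qed.

Section MX.
Variable C : numClosedFieldType.

Lemma mxstarM st n (A B : 'M[C]_n) :
  mxstar st (A *m B) = mxstar st B *m mxstar st A.
Proof. by case: st => /=; rewrite ?trmx_mul // /ctrmx map_mxM trmx_mul. Qed.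

Lemma mxstar_perm st n (s : 'S_n) : mxstar st (perm_mx s : 'M[C]_n) = perm_mx s^-1.
Proof. by case: st => /=; rewrite ?tr_perm_mx // /ctrmx map_perm_mx tr_perm_mx. Qed.

Lemma mxrank_unitl n (U A : 'M[C]_n) : U \in unitmx -> \rank (U *m A) = \rank A.
Proof.
move=> hU; rewrite -mxrank_tr trmx_mul mxrankMfree ?mxrank_tr //.
by rewrite row_free_unit unitmx_tr.
Qed.

Lemma mxrank_unitr n (U A : 'M[C]_n) : U \in unitmx -> \rank (A *m U) = \rank A.
Proof. by move=> hU; rewrite mxrankMfree // row_free_unit. Qed.

Lemma ctrmx_unit n (A : 'M[C]_n) : (ctrmx A \in unitmx) = (A \in unitmx).
Proof. by rewrite /ctrmx unitmx_tr !unitmxE det_map_mx !unitfE conjC_eq0. Qed.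

Lemma mxstar_unit st n (A : 'M[C]_n) : (mxstar st A \in unitmx) = (A \in unitmx).
Proof. by case: st => /=; [exact: unitmx_tr|exact: ctrmx_unit|exact: unitmx_tr|exact: ctrmx_unit]. Qed.

Lemma W_class_unit st n (W : 'M[C]_n) : W_class st W -> W \in unitmx.
Proof.
case: st => /=.
- by case=> _ /mulmx1_unit [].
- by case/mulmx1_unit.
- by case.
- by [].
Qed.

Lemma real_mxM n m p (A : 'M[C]_(n, m)) (B : 'M[C]_(m, p)) :
  real_mx A -> real_mx B -> real_mx (A *m B).
Proof.
move=> hA hB i j; rewrite mxE; apply: rpred_sum => k _; exact: rpredM.
Qed.

Lemma real_perm n (s : 'S_n) : real_mx (perm_mx s : 'M[C]_n).
Proof. move=> i j; rewrite /perm_mx !mxE; exact: realn. Qed.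

Lemma ctrmx_real n m (A : 'M[C]_(n, m)) : real_mx A -> ctrmx A = A^T.
Proof.
move=> hA; apply/matrixP => i j; rewrite !mxE; exact: conj_Creal.
Qed.

Lemma W_class_perm st n (W : 'M[C]_n) (s : 'S_n) :
  W_class st W -> W_class st (W *m perm_mx s).
Proof.
have key : mxstar st W *m W = 1%:M ->
    mxstar st (W *m perm_mx s) *m (W *m perm_mx s) = 1%:M.
  move=> h; rewrite mxstarM mxstar_perm -!mulmxA (mulmxA (mxstar st W)) h mul1mx.
  by rewrite -perm_mxM mulVg perm_mx1.
case: st key => /= key.
- by case=> hr hW; split; [exact: real_mxM (real_perm s)| exact: key].
- by move=> hW; exact: key.
- by case=> hr hW; split; [exact: real_mxM (real_perm s)| rewrite unitmx_mul hW unitmx_perm].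
- by move=> hW; rewrite unitmx_mul hW unitmx_perm.
Qed.

Lemma bd_sum n s k (F : 'I_k -> 'M[C]_n) (a : 'I_k -> C) :
  (forall i, block_diag s (F i)) -> block_diag s (\sum_(i < k) a i *: F i).
Proof.
move=> hF i j hij; rewrite summxE big1 // => c _; by rewrite mxE hF // mulr0.
Qed.

Lemma conj_lin st n (W : 'M[C]_n) k (F : 'I_k -> 'M[C]_n) (a : 'I_k -> C) :
  mxstar st W *m (\sum_(i < k) a i *: F i) *m W =
  \sum_(i < k) a i *: (mxstar st W *m F i *m W).
Proof.
rewrite mulmx_sumr mulmx_suml; apply: eq_bigr => i _.
by rewrite -scalemxAr -scalemxAl.
Qed.


Lemma single_block n s (M : 'M[C]_n) (y : 'cV_n) a b :
  block_diag s M -> (n - \rank M)%N = 1%N -> M *m y = 0 ->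
  y a 0 != 0 -> y b 0 != 0 -> blk s a = blk s b.
Proof.
move=> hM hr hy ya0 yb0; apply/eqP; apply/negPn/negP => hab.
pose ya : 'cV[C]_n := \col_i (if blk s i == blk s a then y i 0 else 0).
pose yb := y - ya.
have Mya : M *m ya = 0.
  apply/colP => i; rewrite !mxE.
  have -> : \sum_j M i j * ya j 0 =
            if blk s i == blk s a then (M *m y) i 0 else 0.
    case: ifP => hi.
      rewrite mxE; apply: eq_bigr => j _; rewrite mxE.
      case: ifP => hj //; rewrite (hM i j) ?mul0r //.
      by rewrite (eqP hi) eq_sym hj.
    apply: big1 => j _; rewrite mxE; case: ifP => hj; last by rewrite mulr0.
    by rewrite (hM i j) ?mul0r // (eqP hj) hi.
  by rewrite hy mxE; case: ifP.
have Myb : M *m yb = 0 by rewrite mulmxBr hy Mya subrr.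
have yba : yb a 0 = 0 by rewrite !mxE eqxx subrr.
have ybb : yb b 0 = y b 0 by rewrite !mxE eq_sym (negbTE hab) subr0.
have yaa : ya a 0 = y a 0 by rewrite mxE eqxx.
have kb : (yb^T <= kermx M^T)%MS by apply/sub_kermxP; rewrite -trmx_mul Myb trmx0.
have ka : (ya^T <= kermx M^T)%MS by apply/sub_kermxP; rewrite -trmx_mul Mya trmx0.
have rk : \rank (kermx M^T) = 1%N by rewrite mxrank_ker mxrank_tr.
have ybn0 : yb^T != 0.
  apply/eqP => h; move: yb0; rewrite -ybb.
  have hyb : yb = 0 by rewrite -[yb]trmxK h trmx0.
  by rewrite hyb mxE eqxx.
have : (kermx M^T <= yb^T)%MS.
  have := mxrank_leqif_sup kb; rewrite rk rank_rV ybn0 => -[_ <-] //.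
move=> hk; have /sub_rVP [c hc] : (ya^T <= yb^T)%MS by exact: submx_trans hk.
have hc' : ya = c *: yb by rewrite -[ya]trmxK hc linearZ /= trmxK.
have h : ya a 0 = c * yb a 0 by rewrite {1}hc' mxE.
by move: ya0; rewrite -yaa h yba mulr0 eqxx.
Qed.


Lemma sum_indic n (P : pred 'I_n) : \sum_i ((P i)%:R : C) = #|P|%:R.
Proof.
rewrite -sumr_const [RHS]big_mkcond /=; apply: eq_bigr => i _.
by rewrite [in RHS]unfold_in; case: (P i).
Qed.

Definition dg n (f : 'I_n -> nat) (k : nat) : 'M[C]_n :=
  diag_mx (\row_i ((f i == k)%:R)).

Lemma supp_comm n (Y : 'M[C]_n) (b be : 'I_n -> nat) k :
  (forall i j, Y i j != 0 -> b i = be j) -> Y *m dg be k = dg b k *m Y.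
Proof.
move=> h; rewrite mul_mx_diag mul_diag_mx; apply/matrixP => i j; rewrite !mxE.
have [/eqP ->|/h ->] := boolP (Y i j == 0); first by rewrite mul0r mulr0.
by rewrite mulrC.
Qed.

Lemma supp_inv n (Y : 'M[C]_n) (b be : 'I_n -> nat) :
  Y \in unitmx -> (forall i j, Y i j != 0 -> b i = be j) ->
  forall j i, invmx Y j i != 0 -> b i = be j.
Proof.
move=> hY h j i hji; apply/eqP; apply/negP => /negP hne.
have e := supp_comm (be j) h.
have e2 : dg be (be j) *m invmx Y = invmx Y *m dg b (be j).
  by rewrite -[LHS](mulKmx hY) (mulmxA Y) e mulmxK.
move/matrixP: e2 => /(_ j i); rewrite mul_mx_diag mul_diag_mx !mxE eqxx.
rewrite (negbTE hne) mulr0 mul1r => e3.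
by move: hji; rewrite e3 eqxx.
Qed.

Lemma supp_count n (Y : 'M[C]_n) (b be : 'I_n -> nat) :
  Y \in unitmx -> (forall i j, Y i j != 0 -> b i = be j) ->
  forall k, #|[pred i | b i == k]| = #|[pred j | be j == k]|.
Proof.
move=> hY h k; have e := supp_comm k h.
have e2 : dg b k = Y *m dg be k *m invmx Y by rewrite e mulmxK.
have : \tr (dg b k) = \tr (dg be k).
  by rewrite e2 mxtrace_mulC mulmxA mulVmx // mul1mx.
rewrite !mxtrace_diag.
rewrite (eq_bigr (fun i => (([pred i | b i == k] : pred 'I_n) i)%:R)); last by move=> i _; rewrite mxE.
rewrite [in X in _ = X -> _](eq_bigr (fun i => (([pred i | be i == k] : pred 'I_n) i)%:R)); last by move=> i _; rewrite mxE.
by rewrite !sum_indic => /eqP; rewrite eqr_nat => /eqP.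
Qed.


Lemma col_mulmx n m p (A : 'M[C]_(n, m)) (B : 'M[C]_(m, p)) j :
  col j (A *m B) = A *m col j B.
Proof. by rewrite !colE mulmxA. Qed.

Lemma in_span_self n q (B : 'I_q -> 'M[C]_n) i : in_span B (B i).
Proof.
exists (fun c => (c == i)%:R); rewrite (bigD1 i) //= eqxx scale1r big1 ?addr0 //.
by move=> c /negbTE ->; rewrite scale0r.
Qed.

Lemma sol_supp st n p q (A : 'I_p.+1 -> 'M[C]_n) (B : 'I_q.+1 -> 'M[C]_n)
  (lam : 'I_n -> C) (X : 'M[C]_n) s W :
  (forall M, in_span A M <-> in_span B M) ->
  (forall j, eigenpair B (lam j) (col j X)) ->
  (forall j, geom_mult B (lam j) = 1%N) ->
  jbd_sol st A s W ->
  forall j a b, (invmx W *m X) a j != 0 -> (invmx W *m X) b j != 0 ->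
  blk s a = blk s b.
Proof.
move=> hspan heig hgm [hW hbd] j a b ha hb.
have Wu := W_class_unit hW.
pose M := mxstar st W *m mxpoly_eval B (lam j) *m W.
have bdM : block_diag s M.
  rewrite /M /mxpoly_eval conj_lin; apply: bd_sum => i.
  have [c ->] := (proj2 (hspan (B i))) (in_span_self B i).
  by rewrite conj_lin; apply: bd_sum.
have rM : (n - \rank M)%N = 1%N.
  rewrite /M mxrank_unitr // mxrank_unitl ?mxstar_unit //.
  by rewrite -(hgm j) /geom_mult mxrank_coker.
have My : M *m col j (invmx W *m X) = 0.
  have [_ [_ e]] := heig j.
  by rewrite col_mulmx /M -!mulmxA (mulKVmx Wu) e mulmx0.
apply: (single_block bdM rM My); by rewrite mxE.
Qed.


Lemma gen_sol st n p (A : 'I_p -> 'M[C]_n) (T : eqType) (ka : 'I_n -> T)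
  (M : 'M[C]_n) :
  W_class st M ->
  (forall i a b, ka a != ka b -> (mxstar st M *m A i *m M) a b = 0) ->
  exists s' W', [/\ is_partition n s', jbd_sol st A s' W'
                  & size s' = size (undup (map ka (enum 'I_n)))].
Proof.
move=> hM hA.
set L := undup (map ka (enum 'I_n)); set d := size L.
pose kp j := index (ka j) L.
have kaL j : ka j \in L by rewrite mem_undup map_f // mem_enum.
have kpd j : (kp j < d)%N by rewrite index_mem.
have kpinj a b : kp a = kp b -> ka a = ka b.
  by move=> e; rewrite -(nth_index (ka a) (kaL a)) -(nth_index (ka a) (kaL b)) -/(kp a) -/(kp b) e.
pose F v := #|[pred j | kp j == v]|.
pose s' := mkseq F d.
have cnt v : nth 0%N s' v = F v.
  case: (ltnP v d) => hv; first by rewrite nth_mkseq.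
  rewrite nth_default ?size_mkseq // /F eq_card0 // => j; rewrite !inE.
  by apply/negbTE; rewrite neq_ltn (leq_trans (kpd j) hv).
have sum : sumn s' = n.
  rewrite sumnE /s' /mkseq big_map.
  have -> : \sum_(i <- iota 0 d) F i = \sum_(i < d) F i.
    by have := @big_mkord _ 0%N addn d xpredT F; rewrite /index_iota subn0.
  have e1 : forall v : 'I_d, F v = \sum_(j < n) (kp j == v : nat).
    move=> v; rewrite /F -sum1_card big_mkcond /=; apply: eq_bigr => j _.
    by rewrite inE; case: (_ == _).
  rewrite (eq_bigr _ (fun v _ => e1 v)) exchange_big /=.
  rewrite -[n in RHS]card_ord -sum1_card; apply: eq_bigr => j _.
  rewrite (bigD1 (Ordinal (kpd j))) //= eqxx big1 ?addn0 // => v hv.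
  by rewrite eq_sym; case: eqP => // e; move: hv; rewrite -val_eqE /= e eqxx.
have part : is_partition n s'.
  rewrite /is_partition sum eqxx andbT; apply/allP => x /mapP [v].
  rewrite mem_iota add0n => /andP [_ hv] ->.
  have [y0 _] : exists y0 : T, true.
    by move: hv; rewrite /d; case: (L) => [|y0 L'] //; exists y0.
  have : nth y0 L v \in L by rewrite mem_nth.
  rewrite {1}/L mem_undup => /mapP [j _ ej].
  have kpj : kp j = v by rewrite /kp -ej index_uniq // undup_uniq.
  rewrite lt0n; apply/eqP => /card0_eq /(_ j); by rewrite !inE kpj eqxx.
have [sg hsg] : exists sg : 'S_n, forall i : 'I_n, blk s' i = kp (sg i).
  apply: perm_of_counts => k; rewrite (card_blk _ sum) cnt.
  by apply: eq_card => j.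
exists s', (M *m perm_mx sg^-1); split; [exact: part | | by rewrite size_mkseq].
split; first exact: W_class_perm.
move=> i a b hab.
have -> : mxstar st (M *m perm_mx sg^-1) *m A i *m (M *m perm_mx sg^-1) =
   col_perm sg (row_perm sg (mxstar st M *m A i *m M)).
  by rewrite mxstarM mxstar_perm invgK col_permE row_permE !mulmxA.
set K := mxstar st M *m A i *m M.
have -> : col_perm sg (row_perm sg K) a b = K (sg a) (sg b) by rewrite /K !mxE.
apply: hA; apply: contra hab => /eqP ek.
by rewrite !hsg /kp ek.
Qed.

End MX.

Import Order.TTheory GRing.Theory Num.Theory.

Section GS.
Variable C : numClosedFieldType.

Lemma ctrmxM n m p (A : 'M[C]_(n, m)) (B : 'M[C]_(m, p)) :
  ctrmx (A *m B) = ctrmx B *m ctrmx A.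
Proof. by rewrite /ctrmx map_mxM trmx_mul. Qed.

Lemma ctrmxE n m (A : 'M[C]_(n, m)) i j : ctrmx A i j = (A j i)^*.
Proof. by rewrite !mxE. Qed.

Lemma real_mxB n m (A B : 'M[C]_(n, m)) : real_mx A -> real_mx B -> real_mx (A - B).
Proof. by move=> hA hB i j; rewrite !mxE rpredB. Qed.

Lemma real_ctr n m (A : 'M[C]_(n, m)) : real_mx A -> real_mx (ctrmx A).
Proof. by move=> hA i j; rewrite ctrmxE conj_Creal. Qed.

Lemma real_col n m (A : 'M[C]_(n, m)) j : real_mx A -> real_mx (col j A).
Proof. by move=> hA a b; rewrite mxE. Qed.

Lemma real_one n : real_mx (1%:M : 'M[C]_n).
Proof. by move=> a b; rewrite mxE realn. Qed.

Lemma ip_ge0 n (v : 'cV[C]_n) : 0 <= (ctrmx v *m v) 0 0.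
Proof.
rewrite mxE; apply: sumr_ge0 => i _; by rewrite ctrmxE mulrC mul_conjC_ge0.
Qed.

Lemma ip_eq0 n (v : 'cV[C]_n) : (ctrmx v *m v) 0 0 = 0 -> v = 0.
Proof.
rewrite mxE => h; apply/colP => i; rewrite [RHS]mxE; apply/eqP.
rewrite -mul_conjC_eq0 mulrC -(ctrmxE v); apply/eqP.
apply: (@psumr_eq0P _ _ xpredT (fun j => ctrmx v 0 j * v j 0)) h i isT => j _.
by rewrite ctrmxE mulrC mul_conjC_ge0.
Qed.


Lemma gs_step n (N : 'M[C]_n) (T : eqType) (ka : 'I_n -> T) m (R : 'M[C]_n)
  (hm : (m < n)%N) :
  N \in unitmx -> (forall a b, ka a != ka b -> (ctrmx N *m N) a b = 0) ->
  (forall a b, R a b != 0 -> ka a = ka b) ->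
  (forall a b, R a b != 0 -> (a <= b)%N) ->
  (forall a b : 'I_n, (m <= b)%N -> R a b = (a == b)%:R) ->
  (forall a b : 'I_n, (a < m)%N -> (b < m)%N ->
     (ctrmx (N *m R) *m (N *m R)) a b = (a == b)%:R) ->
  (real_mx N -> real_mx R) ->
  exists R' : 'M[C]_n,
  [/\ forall a b, R' a b != 0 -> ka a = ka b,
      forall a b, R' a b != 0 -> (a <= b)%N,
      forall a b : 'I_n, (m.+1 <= b)%N -> R' a b = (a == b)%:R,
      forall a b : 'I_n, (a < m.+1)%N -> (b < m.+1)%N ->
        (ctrmx (N *m R') *m (N *m R')) a b = (a == b)%:R
    & real_mx N -> real_mx R'].
Proof.
move=> hN hG h1 h2 h3 h4 h5.
pose mo : 'I_n := Ordinal hm.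
pose Q := N *m R.
pose x := col mo N.
pose cv : 'cV[C]_n := \col_c (if (c < m)%N then (ctrmx Q *m x) c 0 else 0).
pose u : 'cV[C]_n := col mo 1%:M - R *m cv.
pose v := N *m u.
pose nv := sqrtC ((ctrmx v *m v) 0 0).
have cv0 (c : 'I_n) : (m <= c)%N -> cv c 0 = 0 by rewrite mxE leqNgt => /negbTE ->.
have cvk (c : 'I_n) : cv c 0 != 0 -> ka c = ka mo.
  rewrite mxE; case: ifP => _; last by rewrite eqxx.
  apply: contraNeq => hk.
  rewrite /Q /x ctrmxM -mulmxA -col_mulmx mxE; apply/eqP/big1 => d _.
  rewrite ctrmxE mxE; have [->|hd] := eqVneq (R d c) 0; first by rewrite conjC0 mul0r.
  by rewrite hG ?mulr0 // (h1 _ _ hd).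
have uE (a : 'I_n) : u a 0 = (a == mo)%:R - \sum_c R a c * cv c 0.
  by rewrite !mxE.
have umo : u mo 0 = 1.
  rewrite uE eqxx big1 ?subr0 // => c _.
  have [->|hc] := eqVneq (R mo c) 0; first by rewrite mul0r.
  by rewrite cv0 ?mulr0 // (h2 _ _ hc).
have uhi (a : 'I_n) : (m < a)%N -> u a 0 = 0.
  move=> ha; rewrite uE.
  have -> : (a == mo) = false by apply/negbTE; rewrite -val_eqE /= neq_ltn ha orbT.
  rewrite big1 ?subrr // => c _.
  have [->|hc] := eqVneq (R a c) 0; first by rewrite mul0r.
  by rewrite cv0 ?mulr0 // ltnW // (leq_trans ha (h2 _ _ hc)).
have uk (a : 'I_n) : u a 0 != 0 -> ka a = ka mo.
  have [->//|ham] := eqVneq a mo.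
  apply: contraNeq => hk; rewrite uE (negbTE ham) sub0r big1 ?oppr0 // => c _.
  have [->|hc] := eqVneq (R a c) 0; first by rewrite mul0r.
  have [->|hcv] := eqVneq (cv c 0) 0; first by rewrite mulr0.
  by move: hk; rewrite (h1 _ _ hc) (cvk _ hcv) eqxx.
have vne0 : v != 0.
  apply/eqP => hv; have : u = 0 by rewrite -(mulKmx hN u) -/v hv mulmx0.
  by move/colP/(_ mo); rewrite umo mxE => /eqP; rewrite oner_eq0.
have ipv : 0 < (ctrmx v *m v) 0 0.
  by rewrite lt_def ip_ge0 andbT; apply/eqP => /ip_eq0 /eqP; rewrite (negbTE vne0).
have nvr : nv \is Num.real by apply: sqrtC_real; exact: ltW.
have nv0 : nv != 0 by rewrite sqrtC_eq0 gt_eqF.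
have ipv_ne0 : (ctrmx v *m v) 0 0 != 0 by rewrite gt_eqF.
have nv2 : nv ^+ 2 = (ctrmx v *m v) 0 0 by rewrite sqrtCK.
pose R' : 'M[C]_n := \matrix_(a, b) if b == mo then u a 0 / nv else R a b.
have vE : v = x - Q *m cv.
  by rewrite /v /u mulmxBr -col_mulmx mulmx1 mulmxA.
have cross (a : 'I_n) : (a < m)%N -> (ctrmx Q *m v) a 0 = 0.
  move=> ha; rewrite vE mulmxBr mulmxA.
  have subE (A B : 'cV[C]_n) i : (A - B) i 0 = A i 0 - B i 0 by rewrite !mxE.
  rewrite subE [(_ *m cv) a 0]mxE.
  rewrite (bigD1 a) //= h4 // eqxx mul1r [cv a 0]mxE ha big1 ?addr0 ?subrr // => c hc.
  case: (ltnP c m) => hcm; first by rewrite h4 // eq_sym (negbTE hc) mul0r.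
  by rewrite cv0 // mulr0.
have Q'E : N *m R' = \matrix_(a, b) if b == mo then v a 0 / nv else Q a b.
  apply/matrixP => a b; rewrite [RHS]mxE; case: eqP => hb.
    rewrite [LHS]mxE /v [(N *m u) a 0]mxE mulr_suml; apply: eq_bigr => c _.
    by rewrite mxE hb eqxx mulrA.
  rewrite [LHS]mxE /Q [(N *m R) a b]mxE; apply: eq_bigr => c _.
  by rewrite mxE; move/eqP/negbTE: hb => ->.
exists R'; split.
- move=> a b; rewrite /R' mxE; have [->|hb] := eqVneq b mo; last exact: h1.
  by rewrite mulf_eq0 negb_or => /andP [/uk].
- move=> a b; rewrite /R' mxE; have [->|hb] := eqVneq b mo; last exact: h2.
  rewrite mulf_eq0 negb_or => /andP [hu _]; rewrite leqNgt /=.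
  by apply: contra hu => /uhi ->.
- move=> a b hb; rewrite /R' mxE; have [hbm|hbm] := eqVneq b mo; last by rewrite h3 // ltnW.
  by move: hb; rewrite hbm /= ltnn.
- move=> a b ha hb; rewrite Q'E.
  set K := \matrix_(a, b) if b == mo then v a 0 / nv else Q a b.
  have KE a' b' : (ctrmx K *m K) a' b' = \sum_i (K i a')^* * K i b'.
    by rewrite mxE; apply: eq_bigr => i _; rewrite ctrmxE.
  have E1 a' b' : a' != mo -> b' != mo -> (ctrmx K *m K) a' b' = (ctrmx Q *m Q) a' b'.
    move=> ha' hb'; rewrite KE mxE; apply: eq_bigr => i _.
    by rewrite ctrmxE !mxE (negbTE ha') (negbTE hb').
  have E2 (a' : 'I_n) : (a' < m)%N -> (ctrmx K *m K) a' mo = 0.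
    move=> ha'; have ha'' : a' != mo by rewrite -val_eqE /= neq_ltn ha'.
    transitivity ((ctrmx Q *m v) a' 0 / nv); last by rewrite cross // mul0r.
    rewrite KE [(ctrmx Q *m v) a' 0]mxE mulr_suml; apply: eq_bigr => i _.
    by rewrite ctrmxE /K !mxE (negbTE ha'') eqxx mulrA.
  have E3 : (ctrmx K *m K) mo mo = 1.
    have nvc : nv^* = nv by apply: conj_Creal.
    transitivity ((ctrmx v *m v) 0 0 / nv ^+ 2); last by rewrite nv2 divff.
    rewrite KE [(ctrmx v *m v) 0 0]mxE mulr_suml; apply: eq_bigr => i _.
    rewrite /K !mxE eqxx rmorphM fmorphV /= nvc expr2 invfM.
    by rewrite mulrACA.
  have herm a' b' : (ctrmx K *m K) a' b' = ((ctrmx K *m K) b' a')^*.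
    rewrite !KE rmorph_sum; apply: eq_bigr => i _.
    by rewrite rmorphM /= conjCK mulrC.
  have [am|am] := eqVneq a mo; have [bm|bm] := eqVneq b mo.
  + by rewrite am bm E3 eqxx.
  + have hb' : (b < m)%N by move: hb bm; rewrite ltnS leq_eqVlt -val_eqE /= => /orP [->|].
    by rewrite am herm E2 // conjC0 eq_sym (negbTE bm).
  + have ha' : (a < m)%N by move: ha am; rewrite ltnS leq_eqVlt -val_eqE /= => /orP [->|].
    by rewrite bm E2 // (negbTE am).
  + have ha' : (a < m)%N by move: ha am; rewrite ltnS leq_eqVlt -val_eqE /= => /orP [->|].
    have hb' : (b < m)%N by move: hb bm; rewrite ltnS leq_eqVlt -val_eqE /= => /orP [->|].
    by rewrite E1 // h4.
- move=> hr a b; rewrite /R' mxE; case: (b == mo); last exact: h5.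
  have hR := h5 hr.
  have hQ : real_mx Q by exact: real_mxM.
  have hcv : real_mx cv.
    move=> c d; rewrite mxE; case: ifP => _; last exact: real0.
    by apply: real_mxM; [exact: real_ctr | exact: real_col].
  have hu : real_mx u.
    by apply: real_mxB; [apply: real_col; exact: real_one | exact: real_mxM].
  by rewrite rpredM // realV.
Qed.


Lemma gs n (N : 'M[C]_n) (T : eqType) (ka : 'I_n -> T) :
  N \in unitmx -> (forall a b, ka a != ka b -> (ctrmx N *m N) a b = 0) ->
  exists R : 'M[C]_n, [/\ forall a b, R a b != 0 -> ka a = ka b,
     ctrmx (N *m R) *m (N *m R) = 1%:M & (real_mx N -> real_mx R)].
Proof.
move=> hN hG.
suff: forall m, (m <= n)%N -> exists R : 'M[C]_n,
  [/\ forall a b, R a b != 0 -> ka a = ka b,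
      forall a b, R a b != 0 -> (a <= b)%N,
      forall a b : 'I_n, (m <= b)%N -> R a b = (a == b)%:R,
      forall a b : 'I_n, (a < m)%N -> (b < m)%N ->
        (ctrmx (N *m R) *m (N *m R)) a b = (a == b)%:R
    & real_mx N -> real_mx R].
  move=> /(_ n (leqnn n)) [R [h1 _ _ h4 h5]]; exists R; split => //.
  by apply/matrixP => a b; rewrite h4 // mxE.
elim => [_|m IH hm].
  exists 1%:M; split.
  - by move=> a b; rewrite mxE; have [->|] := eqVneq a b; rewrite ?mulr0n ?eqxx.
  - by move=> a b; rewrite mxE; have [->|] := eqVneq a b; rewrite ?mulr0n ?eqxx.
  - by move=> a b _; rewrite mxE.
  - by [].
  - by move=> _; exact: real_one.
have [R [h1 h2 h3 h4 h5]] := IH (ltnW hm).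
exact: (gs_step hm hN hG h1 h2 h3 h4 h5).
Qed.

End GS.

Section RP.
Variable C : numClosedFieldType.

Lemma real_part n (X : 'M[C]_n) : X \in unitmx ->
  exists Xr : 'M[C]_n, [/\ real_mx Xr, Xr \in unitmx &
    forall F : 'M[C]_n, real_mx F -> forall i j, (F *m X) i j = 0 -> (F *m Xr) i j = 0].
Proof.
move=> hX.
pose Pr := map_mx (fun z : C => 'Re z) X; pose Pi := map_mx (fun z : C => 'Im z) X.
pose p := \det (map_mx polyC Pr + 'X *: map_mx polyC Pi).
have horner_evaliC x : horner_eval (x : C) \o polyC =1 id := fun=> hornerC _ _.
have Qunit x : (Pr + x *: Pi \in unitmx) = (p.[x] != 0).
  rewrite /p -horner_evalE -det_map_mx map_mxD map_mxZ/= horner_evalE hornerX.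
  have ev (M : 'M[C]_n) : map_mx (horner_eval x) (map_mx polyC M) = M.
    by rewrite -map_mx_comp map_mx_id.
  by rewrite !ev unitmxE unitfE.
have XE : X = Pr + 'i *: Pi.
  by apply/matrixP => i j; rewrite !mxE -Crect.
have p_neq0 : p != 0.
  by move: hX; rewrite XE Qunit; apply: contra_neq => ->; rewrite hornerE.
have [a a_real rootNa] : exists2 a, a \is Num.real &  ~~ root p a.
  have rs_uniq : uniq [seq (i%:R : C) | i <- iota 0 (size p)].
    by rewrite map_inj_uniq ?iota_uniq //; apply: mulrIn; rewrite oner_eq0.
  have := contraNN (fun x => max_poly_roots p_neq0 x rs_uniq).
  rewrite size_map size_iota ltnn => /(_ isT) /allPn[a a_in rootNpa].
  by exists a => //; by move: a_in => /mapP [i _ ->]; rewrite realn.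
exists (Pr + a *: Pi); split.
- by move=> i j; rewrite !mxE rpredD ?rpredM ?Creal_Re ?Creal_Im.
- by rewrite Qunit.
- move=> F hF i j h.
  have -> : (F *m (Pr + a *: Pi)) i j = 'Re ((F *m X) i j) + a * 'Im ((F *m X) i j).
    rewrite !mxE !raddf_sum mulr_sumr -big_split /=; apply: eq_bigr => k _.
    by rewrite !mxE ReMl ?ImMl // mulrDr mulrCA.
  by rewrite h raddf0 raddf0 mulr0 addr0.
Qed.

End RP.

Section Fin.
Variable C : numClosedFieldType.

Lemma real_det n (W : 'M[C]_n) : real_mx W -> \det W \is Num.real.
Proof.
move=> h; rewrite /determinant; apply: rpred_sum => s _; apply: rpredM.
  by apply: rpredX; rewrite rpredN real1.
by apply: rpred_prod => i _; exact: h.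
Qed.

Lemma real_inv n (W : 'M[C]_n) : real_mx W -> real_mx (invmx W).
Proof.
move=> h i j; rewrite /invmx; case: ifP => _; last exact: h.
rewrite !mxE rpredM ?realV ?real_det // /cofactor rpredM //.
  by apply: rpredX; rewrite rpredN real1.
by apply: real_det => a b; rewrite !mxE; exact: h.
Qed.

Lemma mxstar_entry0 st n (Y : 'M[C]_n) a c : Y c a = 0 -> mxstar st Y a c = 0.
Proof. by case: st => h /=; rewrite !mxE h ?conjC0. Qed.

Lemma sandwich st n (Y K : 'M[C]_n) (T : eqType) (bb be : 'I_n -> T) :
  (forall c a, Y c a != 0 -> bb c = be a) ->
  (forall c d, bb c != bb d -> K c d = 0) ->
  forall a b, be a != be b -> (mxstar st Y *m K *m Y) a b = 0.
Proof.
move=> hY hK a b hab; rewrite mxE big1 // => d _; rewrite mxE big_distrl big1 //= => c _.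
have [h|hca] := eqVneq (Y c a) 0; first by rewrite mxstar_entry0 // !mul0r.
have [->|hdb] := eqVneq (Y d b) 0; first by rewrite mulr0.
by rewrite hK ?mulr0 ?mul0r // (hY _ _ hca) (hY _ _ hdb).
Qed.

Lemma bd_one n s : block_diag s (1%:M : 'M[C]_n).
Proof.
move=> i j hij; rewrite mxE; have [e|] := eqVneq i j; last by rewrite mulr0n.
by move: hij; rewrite e eqxx.
Qed.


Lemma orthN st n (W1 W2 N F : 'M[C]_n) s1 s2 (be1 be2 : 'I_n -> nat) :
  W1 \in unitmx -> W2 \in unitmx ->
  (forall i j, (invmx W1 *m N) i j != 0 -> blk s1 i = be1 j) ->
  (forall i j, (invmx W2 *m N) i j != 0 -> blk s2 i = be2 j) ->
  block_diag s1 (mxstar st W1 *m F *m W1) ->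
  block_diag s2 (mxstar st W2 *m F *m W2) ->
  forall a b, (be1 a, be2 a) != (be1 b, be2 b) -> (mxstar st N *m F *m N) a b = 0.
Proof.
move=> hW1 hW2 h1 h2 bd1 bd2 a b; rewrite xpair_eqE negb_and => /orP [hab|hab].
  have -> : mxstar st N *m F *m N =
      mxstar st (invmx W1 *m N) *m (mxstar st W1 *m F *m W1) *m (invmx W1 *m N).
    have eN : N = W1 *m (invmx W1 *m N) by rewrite mulKVmx.
    by rewrite [in LHS]eN mxstarM !mulmxA.
  exact: (sandwich _ h1 bd1).
have -> : mxstar st N *m F *m N =
    mxstar st (invmx W2 *m N) *m (mxstar st W2 *m F *m W2) *m (invmx W2 *m N).
  have eN : N = W2 *m (invmx W2 *m N) by rewrite mulKVmx.
  by rewrite [in LHS]eN mxstarM !mulmxA.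
exact: (sandwich _ h2 bd2).
Qed.


Lemma exists_M st n p (A : 'I_p -> 'M[C]_n) (X W1 W2 : 'M[C]_n) s1 s2
  (be1 be2 : 'I_n -> nat) :
  X \in unitmx -> jbd_sol st A s1 W1 -> jbd_sol st A s2 W2 ->
  (forall i j, (invmx W1 *m X) i j != 0 -> blk s1 i = be1 j) ->
  (forall i j, (invmx W2 *m X) i j != 0 -> blk s2 i = be2 j) ->
  exists M, W_class st M /\ forall i a b, (be1 a, be2 a) != (be1 b, be2 b) ->
    (mxstar st M *m A i *m M) a b = 0.
Proof.
move=> hX [hW1 bd1] [hW2 bd2] S1 S2.
have U1 := W_class_unit hW1; have U2 := W_class_unit hW2.
pose ka j := (be1 j, be2 j).
have real_supp : real_mx W1 -> real_mx W2 -> exists Xr : 'M[C]_n,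
   [/\ real_mx Xr, Xr \in unitmx,
       forall i j, (invmx W1 *m Xr) i j != 0 -> blk s1 i = be1 j &
       forall i j, (invmx W2 *m Xr) i j != 0 -> blk s2 i = be2 j].
  move=> r1 r2; have [Xr [hr hu hz]] := real_part hX.
  exists Xr; split => // i j h.
    apply: S1; apply: contra h => /eqP h'; apply/eqP; exact: hz (real_inv r1) i j h'.
  apply: S2; apply: contra h => /eqP h'; apply/eqP; exact: hz (real_inv r2) i j h'.
have orth_case : forall N : 'M[C]_n, N \in unitmx ->
   (forall i j, (invmx W1 *m N) i j != 0 -> blk s1 i = be1 j) ->
   (forall i j, (invmx W2 *m N) i j != 0 -> blk s2 i = be2 j) ->
   (forall a b, ka a != ka b -> (ctrmx N *m N) a b = 0) ->
   exists R : 'M[C]_n, [/\ ctrmx (N *m R) *m (N *m R) = 1%:M,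
     (real_mx N -> real_mx R) &
     forall i a b, ka a != ka b -> (mxstar st (N *m R) *m A i *m (N *m R)) a b = 0].
  move=> N hN T1 T2 hG; have [R [hR1 hR2 hR3]] := gs hN hG.
  exists R; split => // i a b hab.
  have -> : mxstar st (N *m R) *m A i *m (N *m R) =
      mxstar st R *m (mxstar st N *m A i *m N) *m R by rewrite mxstarM !mulmxA.
  apply: (sandwich _ (bb := ka)) hab => // c d hcd.
  exact: (orthN U1 U2 T1 T2 (bd1 i) (bd2 i)).
case: st hW1 hW2 bd1 bd2 orth_case => /= hW1 hW2 bd1 bd2 orth_case.
-
  have [Xr [hr hu T1 T2]] := real_supp hW1.1 hW2.1.
  have hG : forall a b, ka a != ka b -> (ctrmx Xr *m Xr) a b = 0.
    move=> a b hab; rewrite ctrmx_real // -[Xr^T]mulmx1.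
    apply: (@orthN RealSymOrth _ W1 W2 Xr 1%:M s1 s2 be1 be2) => //=.
      by rewrite mulmx1 hW1.2; exact: bd_one.
    by rewrite mulmx1 hW2.2; exact: bd_one.
  have [R [hR1 hR2 hR3]] := orth_case Xr hu T1 T2 hG.
  exists (Xr *m R); split => //; split; first exact: real_mxM (hR2 hr).
  by rewrite -ctrmx_real ?hR1 //; exact: real_mxM (hR2 hr).
-
  have hG : forall a b, ka a != ka b -> (ctrmx X *m X) a b = 0.
    move=> a b hab; rewrite -[ctrmx X]mulmx1.
    apply: (@orthN HermUnitary _ W1 W2 X 1%:M s1 s2 be1 be2) => //=.
      by rewrite mulmx1 hW1; exact: bd_one.
    by rewrite mulmx1 hW2; exact: bd_one.
  have [R [hR1 hR2 hR3]] := orth_case X hX S1 S2 hG.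
  by exists (X *m R); split.
-
  have [Xr [hr hu T1 T2]] := real_supp hW1.1 hW2.1.
  exists Xr; split => // i a b hab.
  exact: (@orthN RealNonsing _ W1 W2 Xr (A i) s1 s2 be1 be2).
-
  exists X; split => // i a b hab.
  exact: (@orthN CplxNonsing _ W1 W2 X (A i) s1 s2 be1 be2).
Qed.


Lemma sol_struct st n p q (A : 'I_p.+1 -> 'M[C]_n) (B : 'I_q.+1 -> 'M[C]_n)
  (lam : 'I_n -> C) (X : 'M[C]_n) s W :
  (forall M, in_span A M <-> in_span B M) ->
  (forall j, eigenpair B (lam j) (col j X)) ->
  X \in unitmx ->
  (forall j, geom_mult B (lam j) = 1%N) ->
  is_partition n s -> jbd_sol st A s W ->
  exists be : 'I_n -> nat, [/\ W \in unitmx,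
     forall i j, (invmx W *m X) i j != 0 -> blk s i = be j &
     forall k, #|[pred j | be j == k]| = nth 0%N s k].
Proof.
move=> hspan heig hX hgm hpart hsol.
have U := W_class_unit hsol.1.
set Y := invmx W *m X.
have hY : Y \in unitmx by rewrite unitmx_mul unitmx_inv U hX.
pose be j := if [pick i | Y i j != 0] is Some i then blk s i else 0%N.
have S i j : Y i j != 0 -> blk s i = be j.
  move=> h; rewrite /be; case: (pickP (fun i0 => Y i0 j != 0)) => [i' hi'|/(_ i)]; last by rewrite h.
  exact: (sol_supp hspan heig hgm hsol h hi').
exists be; split => // k.
rewrite -(supp_count hY S k); apply: card_blk.
by move/andP: hpart => [_ /eqP].
Qed.

End Fin.

Theorem theorem3p2 (C : numClosedFieldType) (st : setting) (n p q : nat)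
  (A : 'I_p.+1 -> 'M[C]_n) (B : 'I_q.+1 -> 'M[C]_n)
  (lam : 'I_n -> C) (X : 'M[C]_n) :
  (forall i, mat_class st (A i)) ->
  (forall M, in_span A M <-> in_span B M) ->
  (forall j, eigenpair B (lam j) (col j X)) ->
  X \in unitmx ->
  (forall j, geom_mult B (lam j) = 1%N) ->
  forall (s1 : seq nat) (W1 : 'M[C]_n) (s2 : seq nat) (W2 : 'M[C]_n),
    gjbd_sol st A s1 W1 -> gjbd_sol st A s2 W2 ->
    equiv_sol s1 W1 s2 W2.
Proof.
move=> _ hspan heig hX hgm s1 W1 s2 W2 [p1 [j1 m1]] [p2 [j2 m2]].
have [be1 [U1 S1 K1]] := sol_struct hspan heig hX hgm p1 j1.
have [be2 [U2 S2 K2]] := sol_struct hspan heig hX hgm p2 j2.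
have sz12 : size s2 = size s1.
  apply/eqP; rewrite eqn_leq (m1 s2 p2) ?(m2 s1 p1) //; by [exists W1 | exists W2].
set t := size s1.
have pos (s : seq nat) k : is_partition n s -> (k < size s)%N -> (0 < nth 0%N s k)%N.
  by case/andP => /allP h _ hk; apply: h; rewrite mem_nth.
have rng (be : 'I_n -> nat) (s : seq nat) j :
    (forall k, #|[pred j | be j == k]| = nth 0%N s k) -> (be j < size s)%N.
  move=> K; rewrite ltnNge; apply/negP => hj.
  have := K (be j); rewrite nth_default // => /card0_eq /(_ j).
  by rewrite !inE eqxx.
have surj (be : 'I_n -> nat) (s : seq nat) k :
    is_partition n s -> (forall k, #|[pred j | be j == k]| = nth 0%N s k) ->
    (k < size s)%N -> exists j, be j = k.
  move=> hp K hk; have := pos _ _ hp hk; rewrite -K => /card_gt0P [j].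
  by rewrite inE => /eqP; exists j.
have rng1 j : (be1 j < t)%N := rng _ _ j K1.
have rng2 j : (be2 j < t)%N by rewrite /t -sz12; exact: rng _ _ j K2.
have surj1 k : (k < t)%N -> exists j, be1 j = k := surj _ _ k p1 K1.
have surj2 k : (k < t)%N -> exists j, be2 j = k.
  by rewrite /t -sz12; exact: surj _ _ k p2 K2.
have key j j' : (be1 j == be1 j') = (be2 j == be2 j').
  have [M [hM hMo]] := exists_M hX j1 j2 S1 S2.
  pose ka := fun j => (be1 j, be2 j).
  have [s' [W' [hp' hj' hsz']]] := gen_sol (ka := ka) hM hMo.
  have le1 : (size s' <= t)%N by apply: m1 => //; exists W'.
  have le2 : (size s' <= t)%N by rewrite /t -sz12; apply: m2 => //; exists W'.
  set L := map ka (enum 'I_n).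
  have lo (f : nat * nat -> nat) : (forall k, (k < t)%N -> exists j, f (ka j) = k) ->
      size (undup (map f L)) = size (undup L).
    move=> hs; apply/eqP; rewrite eqn_leq undup_map_le /=.
    rewrite -hsz' (leq_trans le1) //.
    rewrite -[t](size_iota 0); apply: uniq_leq_size; first exact: iota_uniq.
    move=> k; rewrite mem_iota add0n => /hs [i hi].
    by rewrite mem_undup -hi; apply: map_f; apply: map_f; rewrite mem_enum.
  have in1 := undup_map_eq (lo fst surj1).
  have in2 := undup_map_eq (lo snd surj2).
  have kaL i : ka i \in L by apply: map_f; rewrite mem_enum.
  apply/eqP/eqP => e.
    by have := in1 _ _ (kaL j) (kaL j') e; case.
  by have := in2 _ _ (kaL j) (kaL j') e; case.
pose sgf k := if [pick j | be1 j == k] is Some j then be2 j else k.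
have sgfE j : be2 j = sgf (be1 j).
  rewrite /sgf; case: (pickP (fun i => be1 i == be1 j)) => [j' hj'|/(_ j)]; last by rewrite eqxx.
  by apply/eqP; rewrite -key eq_sym.
have sgf_lt k : (k < t)%N -> (sgf k < t)%N.
  by move=> /surj1 [j <-]; rewrite -sgfE.
have sgf_inj k k' : (k < t)%N -> (k' < t)%N -> sgf k = sgf k' -> k = k'.
  move=> /surj1 [j <-] /surj1 [j' <-]; rewrite -!sgfE => /eqP.
  by rewrite -key => /eqP.
pose sgo (k : 'I_t) : 'I_t := Ordinal (sgf_lt k (ltn_ord k)).
have sgo_inj : injective sgo.
  by move=> k k' /(congr1 val) /= /sgf_inj => h; apply: val_inj; apply: h.
pose sg : 'S_t := perm sgo_inj.
have sgE k : val (sg k) = sgf k by rewrite permE.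
have cnt1 k : #|[pred i : 'I_n | blk s1 i == k]| = #|[pred j | be1 j == k]|.
  by rewrite K1; apply: card_blk; case/andP: p1 => _ /eqP.
have cnt2 k : #|[pred i : 'I_n | blk s2 i == k]| = #|[pred j | be2 j == k]|.
  by rewrite K2; apply: card_blk; case/andP: p2 => _ /eqP.
have [r1 hr1] := perm_of_counts cnt1.
have [r2 hr2] := perm_of_counts cnt2.
pose pi : 'S_n := (r1 * r2^-1)%g.
have hpi r : blk s2 (pi r) = sgf (blk s1 r).
  by rewrite permM hr2 permKV hr1 sgfE.
have hs2 : s2 = perm_part sg.
  apply: (@eq_from_nth _ 0%N); first by rewrite size_map size_enum_ord sz12.
  move=> v hv; rewrite sz12 in hv.
  rewrite (nth_map (Ordinal hv)) ?size_enum_ord //.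
  have -> : nth (Ordinal hv) (enum 'I_t) v = Ordinal hv.
    by apply: val_inj; rewrite /= nth_enum_ord.
  set k := (sg^-1)%g (Ordinal hv).
  have hk : sgf k = v by rewrite -sgE /k permKV.
  rewrite -hk -K2 -K1; apply: eq_card => j; rewrite !inE sgfE.
  apply/eqP/eqP => [|->] //; apply: sgf_inj => //; exact: rng1.
set Y1 := invmx W1 *m X; set Y2 := invmx W2 *m X.
have hY2 : Y2 \in unitmx by rewrite unitmx_mul unitmx_inv U2 hX.
have IS2 := supp_inv hY2 S2.
pose Z := invmx W1 *m W2.
have ZE : Z = Y1 *m invmx Y2.
  have e : Z *m Y2 = Y1 by rewrite /Z /Y2 !mulmxA mulmxK.
  by rewrite -e mulmxK.
exists sg, (Z *m perm_mx pi^-1), pi; split.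
- by rewrite !unitmx_mul unitmx_inv U1 U2 unitmx_perm.
- move=> i r hir.
  rewrite -col_permE mxE ZE mxE big1 // => j _.
  have [->|h1] := eqVneq (Y1 i j) 0; first by rewrite mul0r.
  have [->|h2] := eqVneq (invmx Y2 j (pi r)) 0; first by rewrite mulr0.
  move: hir; rewrite (S1 _ _ h1).
  have e := IS2 _ _ h2; rewrite hpi sgfE in e.
  have ltr : (blk s1 r < t)%N by rewrite hr1; exact: rng1.
  by rewrite (sgf_inj _ _ ltr (rng1 j) e) eqxx.
- by move=> r k hrk; rewrite -hs2 hpi hrk sgE.
- exact: hs2.
- by rewrite /Z mulmxA mulKVmx // -mulmxA -perm_mxM mulVg perm_mx1 mulmx1.
Qed.
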